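(* Let $0<i_1<i_2<\cdots<i_L$ be integers and let $\mathcal S=\{x_0,x_{i_1},\ldots,x_{i_L}\}$, with associated restricted right-arm rotation distance $d_{RRA}^{\mathcal S}$ (rotations allowed only at the root and at the right-arm nodes at levels $i_1,\ldots,i_L$). Let $T_1,T_2$ be finite rooted binary trees with the same number of nodes, forming a (not necessarily reduced) tree pair diagram $(T_1,T_2)$ representing $w\in F$, and let $w'=x_{a_1}^{r_1}\cdots x_{a_k}^{r_k}x_{b_l}^{-s_l}\cdots x_{b_1}^{-s_1}$ be the partially reduced normal form of maximum length of $w$ obtained from $(T_1,T_2)$. If some $x_t^{\pm1}$ with $1\le t\le i_1-1$ appears in $w'$, then $d_{RRA}^{\mathcal S}(T_1,T_2)$ is not defined. Conversely, if no $x_t^{\pm1}$ with $1\le t\le i_1-1$ appears in $w'$, then $d_{RRA}^{\mathcal S}(T_1,T_2)$ is defined.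
   Context: Trees: finite rooted binary trees, each internal vertex (node) having a left and a right child; a tree with $n$ nodes has $n+1$ leaves numbered $0,\ldots,n$ from left to right. The right arm consists of the root and the nodes reachable from it by right edges only; the level of a node is its distance from the root. Right rotation at a node $N$ whose left child $M$ is a node (with $A,B$ the subtrees of $M$ and $C$ the right subtree of $N$) replaces the subtree at $N$ by one whose root has left subtree $A$ and right child a node with subtrees $B,C$; left rotation is the inverse. Thompson's group $F=\langle x_0,x_1,\ldots\mid x_i^{-1}x_nx_i=x_{n+1}\ (i<n)\rangle$. The leaf exponent of leaf $k$ is the length of the longest upward path of left edges from leaf $k$ none of whose vertices lies on the right arm. The word associated to a tree pair diagram $(T_1,T_2)$ (trees with the same number $n$ of nodes) is $x_0^{f_0}\cdots x_n^{f_n}x_n^{-e_n}\cdots x_0^{-e_0}$ with $e_i$, $f_i$ the leaf exponents of leaf $i$ in $T_1$, $T_2$; $(T_1,T_2)$ represents the element this word defines. This word is a normal form $x_{a_1}^{r_1}\cdots x_{a_k}^{r_k}x_{b_l}^{-s_l}\cdots x_{b_1}^{-s_1}$ ($r_i,s_i>0$, $0\le a_1<\cdots<a_k$, $0\le b_1<\cdots<b_l$), not necessarily unique. Such a normal form is partially reduced if for every $i>0$, whenever both $x_i$ and $x_i^{-1}$ occur, at least one of $x_{i+1}^{\pm1}$ occurs (no condition is imposed for $i=0$). The partially reduced normal form of maximum length is obtained from the associated word by repeatedly applying the reductions $u\,x_i\,\phi(v)\,x_i^{-1}\,z\mapsto u\,v\,z$ only for $i>0$, where $\phi(x_j)=x_{j+1}$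 and $\phi(v)$ involves only generators of index at least $i+2$. Restricted right-arm rotation distance $d_{RRA}^{\mathcal S}(T_1,T_2)$: the minimal number of rotations, each at a right-arm node at one of the levels $0,i_1,\ldots,i_L$, transforming $T_1$ into $T_2$ (trees keep their number of nodes throughout); it is defined if such a sequence exists. *)

(* Defs.v *)
From mathcomp Require Import all_boot.
Set Implicit Arguments. Unset Strict Implicit. Unset Printing Implicit Defensive.

Inductive tree : Type := Leaf | Node of tree & tree.

Fixpoint nodes (t : tree) : nat :=
  match t with Leaf => 0 | Node l r => (nodes l + nodes r).+1 end.

(** Leaf exponents.  [lexp a t]: leaf exponents (left to right) of the leaves
    of a subtree [t] none of whose vertices lies on the right arm, where [a] is
    the length of the maximal upward path of left edges starting at the root of
    [t] through vertices not on the right arm. *)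
Fixpoint lexp (a : nat) (t : tree) : seq nat :=
  match t with
  | Leaf => [:: a]
  | Node l r => lexp a.+1 l ++ lexp 0 r
  end.

(** [leaf_exps t]: the leaf exponents of leaves 0..n of the tree [t]
    (the vertices visited by [leaf_exps] recursion on the right are the
    right-arm nodes; their left subtrees start with path length 0, since the
    parent lies on the right arm). *)
Fixpoint leaf_exps (t : tree) : seq nat :=
  match t with
  | Leaf => [:: 0]
  | Node l r => lexp 0 l ++ leaf_exps r
  end.

(** Words in the generators x_0, x_1, ...: a letter (i, true) is x_i,
    a letter (i, false) is x_i^{-1}. *)
Definition letter := (nat * bool)%type.
Definition word := seq letter.

(** The word associated to (T1, T2):
    x_0^{f_0} ... x_n^{f_n} x_n^{-e_n} ... x_0^{-e_0},
    e = leaf exponents of T1, f = leaf exponents of T2. *)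
Definition assoc_word (T1 T2 : tree) : word :=
  let e := leaf_exps T1 in
  let f := leaf_exps T2 in
  flatten [seq nseq (nth 0 f i) (i, true) | i <- iota 0 (size f)] ++
  flatten [seq nseq (nth 0 e i) (i, false) | i <- rev (iota 0 (size e))].

Definition shift_letter (a : letter) : letter := (a.1.+1, a.2).

(** One reduction  u x_i phi(v) x_i^{-1} z  |->  u v z  with i > 0 and
    phi(v) involving only generators of index >= i+2. *)
Definition red_step (w w' : word) : Prop :=
  exists (u v z : word) (i : nat),
    [/\ 0 < i, all (fun a : letter => i.+2 <= (shift_letter a).1) v,
        w = u ++ (i, true) :: map shift_letter v ++ (i, false) :: z
      & w' = u ++ v ++ z].

Inductive rtc {A : Type} (R : A -> A -> Prop) : A -> A -> Prop :=
  | rtc_refl x : rtc R x x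
  | rtc_step x y z : R x y -> rtc R y z -> rtc R x z.

Definition partially_reduced (w : word) : Prop :=
  forall i : nat, 0 < i -> (i, true) \in w -> (i, false) \in w ->
    ((i.+1, true) \in w) || ((i.+1, false) \in w).

Definition rot_right (t : tree) : option tree :=
  match t with
  | Node (Node A B) C => Some (Node A (Node B (C)))
  | _ => None
  end.

Definition rot_left (t : tree) : option tree :=
  match t with
  | Node A (Node B C) => Some (Node (Node A B) C)
  | _ => None
  end.

(** Apply [f] at the right-arm node at level [k] (reached from the root by
    [k] right edges). *)
Fixpoint at_level (k : nat) (f : tree -> option tree) (t : tree) : option tree :=
  match k with
  | 0 => f t
  | k'.+1 =>
      match t with
      | Node l r => option_map (Node l) (at_level k' f r)
      | Leaf => None
      end
  end.

(** One rotation at a right-arm node at one of the levels 0, i_1, ..., i_L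
    (the list [lv] is [i_1; ...; i_L]). *)
Definition rra_step (lv : seq nat) (t t' : tree) : Prop :=
  exists k : nat, ((k == 0) || (k \in lv)) /\
    (at_level k rot_right t = Some t' \/ at_level k rot_left t = Some t').

Definition d_RRA_defined (lv : seq nat) (T1 T2 : tree) : Prop :=
  rtc (rra_step lv) T1 T2.

(* Main.v *)
Require Import Defs.
From mathcomp Require Import all_boot zify.
Set Implicit Arguments. Unset Strict Implicit. Unset Printing Implicit Defensive.


Fixpoint ccut (c : nat) (s : seq nat) : seq nat :=
  match c with
  | 0 => [::]
  | c'.+1 => match s with [::] => [::] | x :: s' => x :: ccut (c' + x) s' end
  end.

Lemma ccut0 s : ccut 0 s = [::]. Proof. by case: s. Qed.

Fixpoint plug (ls : seq tree) (r : tree) : tree :=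
  match ls with [::] => r | l :: ls' => Node l (plug ls' r) end.

Fixpoint spine (t : tree) : seq tree :=
  match t with Leaf => [::] | Node A B => spine A ++ [:: B] end.

Lemma plug_cat xs ys r : plug (xs ++ ys) r = plug xs (plug ys r).
Proof. by elim: xs => //= x xs ->. Qed.

Lemma rtc_trans A (R : A -> A -> Prop) x y z : rtc R x y -> rtc R y z -> rtc R x z.
Proof. elim=> [//|a b c Hab _ IH] H; exact: rtc_step Hab (IH H). Qed.

Lemma rtc_map A (R S : A -> A -> Prop) x y :
  (forall a b, R a b -> rtc S a b) -> rtc R x y -> rtc S x y.
Proof. move=> H; elim=> [a|a b c Hab _ IH]; [exact: rtc_refl | exact: rtc_trans (H _ _ Hab) IH]. Qed.

Lemma rtc_sym A (R : A -> A -> Prop) x y :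
  (forall a b, R a b -> R b a) -> rtc R x y -> rtc R y x.
Proof.
move=> Hs; elim=> [a|a b c Hab _ IH]; first exact: rtc_refl.
apply: rtc_trans IH _; apply: rtc_step (Hs _ _ Hab) (rtc_refl _ _).
Qed.

Lemma rtc1 A (R : A -> A -> Prop) x y : R x y -> rtc R x y.
Proof. move=> H; exact: rtc_step H (rtc_refl _ _). Qed.

Lemma beh_lexp t a b s : behead (lexp a t ++ s) = behead (lexp b t ++ s).
Proof. elim: t a b s => [//|l IHl r _] a b s /=; rewrite -!catA; exact: IHl. Qed.

Lemma beh_node l r : behead (leaf_exps (Node l r)) = leaf_exps (plug (spine l) r).
Proof.
elim: l r => [//|A IHA B _] r /=.
by rewrite plug_cat /= -IHA /= -catA (beh_lexp _ 1 0).
Qed.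

Lemma cut_lexp t a c s : ccut c.+1 (lexp a t ++ s) = lexp a t ++ ccut (c + a) s.
Proof.
elim: t a c s => [//|l IHl r IHr] a c s /=.
rewrite -catA IHl -addSnnS IHr addn0 catA //.
Qed.

Lemma at_plug k f ls r : at_level (size ls + k) f (plug ls r) = option_map (plug ls) (at_level k f r).
Proof.
elim: ls => [|l ls IH] /=; first by case: (at_level k f r).
rewrite IH; by case: (at_level k f r).
Qed.

Lemma cut_at k f T T' c : c <= k -> at_level k f T = Some T' ->
  ccut c (leaf_exps T) = ccut c (leaf_exps T').
Proof.
elim: k T T' c => [|k IH] T T' c.
  by case: c => [|c] //= _ _; rewrite !ccut0.
case: T => [//|l r] /=; case E: (at_level k f r) => [r'|//] /= Hc [<-].
case: c Hc => [|c] Hc /=; first by rewrite !ccut0.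
by rewrite !cut_lexp !addn0 (IH _ _ _ Hc E).
Qed.

Definition invT (i1 : nat) (T : tree) := ccut i1.-1 (behead (leaf_exps T)).

Lemma rot_root_inv T T' : rot_right T = Some T' ->
  behead (leaf_exps T) = behead (leaf_exps T').
Proof.
case: T => [//|[//|A B] C] /= [<-].
rewrite -!catA; exact: beh_lexp.
Qed.

Lemma rotr_l T T' : rot_right T = Some T' -> rot_left T' = Some T.
Proof. by case: T => [//|[//|A B] C] /= [<-]. Qed.
Lemma rotl_r T T' : rot_left T = Some T' -> rot_right T' = Some T.
Proof. by case: T => [//|A [//|B C]] /= [<-]. Qed.

Lemma at_sym k f g T T' : (forall a b, f a = Some b -> g b = Some a) ->
  at_level k f T = Some T' -> at_level k g T' = Some T.
Proof.
move=> H; elim: k T T' => [|k IH] T T' /=; first exact: H.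
case: T => [//|l r]; case E: (at_level k f r) => [r'|//] /= [<-] /=.
by rewrite (IH _ _ E).
Qed.

Lemma rra_sym lv T T' : rra_step lv T T' -> rra_step lv T' T.
Proof.
case=> k [Hk [H|H]]; exists k; split=> //.
  right; exact: at_sym rotr_l H.
left; exact: at_sym rotl_r H.
Qed.

Lemma inv_step i1 irest T T' : 0 < i1 -> sorted ltn (i1 :: irest) ->
  rra_step (i1 :: irest) T T' -> invT i1 T = invT i1 T'.
Proof.
move=> Hi Hs [k [Hk Hrot]].
have Hk1 : k = 0 \/ i1 <= k.
  case/orP: Hk => [/eqP->|Hin']; [by left|right].
  move: Hin'; rewrite in_cons => /orP [/eqP->//|Hin].
  have : all (ltn i1) irest by move: Hs => /= /(order_path_min ltn_trans).
  by move/allP => /(_ _ Hin) /ltnW.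
have Hrr : forall T T', at_level 0 rot_right T = Some T' -> invT i1 T = invT i1 T'.
  by move=> A B /= H; rewrite /invT (rot_root_inv H).
case: Hk1 => [Ek|Hik].
  subst k.
  case: Hrot => H; first exact: Hrr.
  symmetry; apply: Hrr; exact: (at_sym (k:=0) rotl_r H).
have Hc : forall f, at_level k f T = Some T' -> invT i1 T = invT i1 T'.
  move=> f; case: k Hik Hk Hrot => [|k]; first by rewrite leqn0 => /eqP E; move: Hi; rewrite E.
  move=> Hik _ _; case: T => [//|l r] /=; case E: (at_level k f r) => [r'|//] /= [<-].
  rewrite /invT !beh_node; apply: (@cut_at (size (spine l) + k) f).
    by rewrite -ltnS prednK // (leq_trans Hik) // ltnS leq_addl.
  by rewrite at_plug E.
by case: Hrot; apply: Hc.
Qed.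

Lemma inv_rtc i1 irest T T' : 0 < i1 -> sorted ltn (i1 :: irest) ->
  rtc (rra_step (i1 :: irest)) T T' -> invT i1 T = invT i1 T'.
Proof.
move=> Hi Hs; elim=> [//|a b c Hab _ IH]; rewrite -IH; exact: inv_step Hab.
Qed.

Fixpoint ldepth (t : tree) : nat := match t with Leaf => 0 | Node l _ => (ldepth l).+1 end.

Lemma lexp_head t a : exists tl, lexp a t = (a + ldepth t) :: tl.
Proof.
elim: t a => [|l IHl r _] a /=; first by exists [::]; rewrite addn0.
case: (IHl a.+1) => tl ->; exists (tl ++ lexp 0 r); by rewrite addSnnS.
Qed.

Lemma lexp_inj t a s t' s' : lexp a t ++ s = lexp a t' ++ s' -> t = t' /\ s = s'.
Proof.
elim: t a s t' s' => [|l IHl r IHr] a s [|l' r'] s' /=.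
- by case.
- case: (lexp_head l' a.+1) => tl ->; case=> /eqP; rewrite -[X in X == _]addn0 addSnnS eqn_add2l.
  by [].
- case: (lexp_head l a.+1) => tl ->; case=> /eqP; rewrite -[X in _ == X]addn0 addSnnS eqn_add2l.
  by [].
- rewrite -!catA => /IHl [-> /IHr [-> ->]]; by [].
Qed.

Definition step_any (c : nat) (t t' : tree) : Prop :=
  exists k, c <= k /\ (at_level k rot_right t = Some t' \/ at_level k rot_left t = Some t').

Lemma step_any_sym c t t' : step_any c t t' -> step_any c t' t.
Proof.
case=> k [Hk [H|H]]; exists k; split=> //.
  right; exact: at_sym rotr_l H.
left; exact: at_sym rotl_r H.
Qed.

Lemma lift_any c l R R' : rtc (step_any c) R R' -> rtc (step_any c.+1) (Node l R) (Node l R').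
Proof.
elim=> [a|a b c' Hab _ IH]; first exact: rtc_refl.
apply: rtc_step IH; case: Hab => k [Hk H]; exists k.+1; split=> //=.
by case: H => ->; [left|right].
Qed.

Lemma any_mono c d t t' : d <= c -> step_any c t t' -> step_any d t t'.
Proof. move=> Hdc [k [Hk H]]; exists k; split=> //; exact: leq_trans Hk. Qed.

Lemma flat_rtc (Rl : tree -> tree -> Prop) l r :
  (forall A B C, Rl (Node (Node A B) C) (Node A (Node B C))) ->
  rtc Rl (Node l r) (Node Leaf (plug (spine l) r)).
Proof.
move=> H; elim: l r => [|A IHA B _] r; first exact: rtc_refl.
apply: rtc_step (H A B r) _; rewrite plug_cat /=; exact: IHA.
Qed.

Lemma nodes_plug_spine l r : nodes (plug (spine l) r) = nodes l + nodes r.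
Proof.
elim: l r => [//|A IHA B _] r /=; rewrite plug_cat /= IHA /=.
by rewrite addnS addSn addnA.
Qed.

Fixpoint vine (n : nat) : tree := match n with 0 => Leaf | n'.+1 => Node Leaf (vine n') end.

Lemma to_vine n R : nodes R <= n -> rtc (step_any 0) R (vine (nodes R)).
Proof.
elim: n R => [|n IH] [|l r] //=; try by move=> _; exact: rtc_refl.
move=> Hn; apply: rtc_trans (flat_rtc _ _ _) _.
  by move=> A B C; exists 0; split=> //; left.
have Hn' : nodes (plug (spine l) r) <= n by rewrite nodes_plug_spine.
rewrite -(nodes_plug_spine l r).
apply: rtc_map (lift_any Leaf (IH _ Hn')) => a b Hab; apply: rtc1; exact: any_mono Hab.
Qed.

Lemma conn R R' : nodes R = nodes R' -> rtc (step_any 0) R R'.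
Proof.
move=> E; apply: rtc_trans (to_vine (leqnn _)) _; rewrite E.
apply: rtc_sym; [exact: step_any_sym | exact: to_vine].
Qed.

Lemma Qlem c X Y : nodes X = nodes Y -> ccut c (leaf_exps X) = ccut c (leaf_exps Y) ->
  rtc (step_any c) X Y.
Proof.
elim: c X Y => [|c IH] X Y E H; first exact: conn.
case: X E H => [|l r]; case: Y => [|l' r'] //= E H; first exact: rtc_refl.
move: H; rewrite !cut_lexp !addn0 => /lexp_inj [El Er]; subst l'.
apply: lift_any; apply: IH Er; by move: E => /eqP; rewrite eqSS eqn_add2l => /eqP.
Qed.

Lemma sim i1 irest g k T T' : 0 < i1 -> (g = rot_right \/ g = rot_left) -> i1 <= k ->
  at_level k g T = Some T' -> rtc (rra_step (i1 :: irest)) T T'.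
Proof.
move=> Hi Hg; elim: k T T' => [|k IH] T T' Hk H.
  by move: Hi; rewrite lt0n -leqn0 Hk.
case: (ltngtP i1 k.+1) => [Hlt|Hgt|Heq].
- case: T H => [//|l0 r] /=; case E: (at_level k g r) => [r'|//] /= [<-].
  case: k IH Hk Hlt E => [|k] IH Hk Hlt E; first by case: (i1) Hi Hlt.
  case: r E => [//|l1 r2] /=; case E2: (at_level k g r2) => [r2'|//] /= [<-].
  apply: rtc_step (_ : rra_step _ _ (Node (Node l0 l1) r2)) _.
    by exists 0; split=> //; right.
  apply: rtc_trans (IH _ (Node (Node l0 l1) r2') Hlt _) _; first by rewrite /= E2.
  by apply: rtc1; exists 0; split=> //; left.
- by move: Hk; rewrite leqNgt Hgt.
- apply: rtc1; exists k.+1; split; first by rewrite Heq in_cons eqxx orbT.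
by case: Hg => Eg; subst g; [left|right].
Qed.

Lemma conv i1 irest T1 T2 : 0 < i1 -> nodes T1 = nodes T2 -> invT i1 T1 = invT i1 T2 ->
  rtc (rra_step (i1 :: irest)) T1 T2.
Proof.
move=> Hi; case: T1 => [|l1 r1]; case: T2 => [|l2 r2] //=; first by move=> *; exact: rtc_refl.
move=> E; rewrite /invT !beh_node => H.
have Hr : forall A B C, rra_step (i1 :: irest) (Node (Node A B) C) (Node A (Node B C)).
  by move=> A B C; exists 0; split=> //; left.
apply: rtc_trans (flat_rtc _ _ Hr) _.
apply: rtc_trans; last first.
  apply: rtc_sym (flat_rtc _ _ Hr); exact: rra_sym.
have E' : nodes (plug (spine l1) r1) = nodes (plug (spine l2) r2).
  by rewrite !nodes_plug_spine; apply/eqP; rewrite -eqSS; apply/eqP.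
have := lift_any Leaf (Qlem E' H); rewrite prednK //.
apply: rtc_map => a b [k [Hk Hab]].
by case: Hab; apply: sim => //; [left|right].
Qed.


Definition Vp (s : seq nat) := forall j, j < size s -> sumn (drop j s) + j < size s.
Definition P1 (s : seq nat) := forall j, 0 < j < size s -> sumn (drop j s) + j < size s.

Lemma Vp_le y : Vp y -> sumn y <= size y.
Proof. case: y => [//|a y] H; have := H 0 (ltn0Sn _); rewrite drop0 addn0; exact: ltnW. Qed.

Lemma P1_cat x y : P1 x -> P1 y -> sumn y < size y -> P1 (x ++ y).
Proof.
move=> Hx Hy Hs j /andP [Hj0 Hj]; rewrite size_cat drop_cat in Hj *.
case: ifP => Hjx.
  rewrite sumn_cat -addnA (addnC (sumn y)) addnA.
  apply: (leq_trans (n := size x + sumn y)). 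
    by rewrite ltn_add2r; apply: Hx; rewrite Hj0.
  by rewrite leq_add2l ltnW.
have Hxj : size x <= j by rewrite leqNgt Hjx.
case: (posnP (j - size x)) => Hd.
  have Ej : j = size x by apply/eqP; rewrite eqn_leq Hxj -subn_eq0 Hd.
  by rewrite Ej subnn drop0 addnC ltn_add2l.
have := Hy (j - size x); rewrite Hd. move=> /(_ ltac:(lia)). lia.
Qed.

Lemma size_lexp a t : size (lexp a t) = (nodes t).+1.
Proof. elim: t a => [//|l IHl r IHr] a /=; rewrite size_cat IHl IHr; lia. Qed.

Lemma sum_lexp a t : sumn (lexp a t) = a + nodes t.
Proof. elim: t a => [|l IHl r IHr] a /=; first by rewrite addn0. rewrite sumn_cat IHl IHr; lia. Qed.

Lemma P1_lexp a t : P1 (lexp a t).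
Proof.
elim: t a => [|l IHl r IHr] a /=.
  by move=> j /andP [H1 H2]; move: H1 H2; case: j.
apply: P1_cat => //; by rewrite sum_lexp size_lexp.
Qed.

Lemma Vp_cat x y : P1 x -> sumn x < size x -> Vp y -> Vp (x ++ y).
Proof.
move=> Hx Hs Hy j; rewrite size_cat drop_cat => Hj; case: ifP => Hjx.
  case: j Hj Hjx => [|j] Hj Hjx.
    by rewrite drop0 sumn_cat addn0 -addSn leq_add // Vp_le.
  rewrite sumn_cat -addnA (addnC (sumn y)) addnA.
  apply: (leq_trans (n := size x + sumn y)).
    by rewrite ltn_add2r; apply: Hx; rewrite Hjx.
  by rewrite leq_add2l Vp_le.
have Hxj : size x <= j by rewrite leqNgt Hjx.
have := Hy (j - size x). move=> /(_ ltac:(lia)). lia.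
Qed.

Lemma Vp_leaf T : Vp (leaf_exps T).
Proof.
elim: T => [|l _ r IHr] /=.
  by case=> [|j] //= _.
apply: Vp_cat => //; first exact: P1_lexp.
by rewrite sum_lexp size_lexp.
Qed.

Lemma Vp_red a x b : Vp (a ++ x :: 0 :: b) -> 0 < x -> Vp (a ++ x.-1 :: b).
Proof.
move=> H Hx j; rewrite !size_cat /= => Hj.
case: (ltnP j (size a)) => Hja.
  have := H j; rewrite !size_cat /= !drop_cat Hja !sumn_cat /= => /(_ ltac:(lia)).
  lia.
case: (posnP (j - size a)) => Hd.
  have Ej : j = size a by lia.
  subst j; have := H (size a); rewrite !size_cat /= !drop_cat ltnn subnn /= => /(_ ltac:(lia)).
  lia.
have := H j.+1; rewrite !size_cat /= => /(_ ltac:(lia)). rewrite !drop_cat.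
have h1 : (j.+1 < size a) = false by lia.
have h2 : (j < size a) = false by lia.
rewrite h1 h2.
have -> : j.+1 - size a = (j - size a).+1 by lia.
case E: (j - size a) => [|d]; first by move: Hd; rewrite E.
rewrite /=; lia.
Qed.


Lemma cut_red c a x b : 0 < x ->
  (ccut c (a ++ x :: 0 :: b) = ccut c (a ++ x.-1 :: b) /\ size (ccut c (a ++ x :: 0 :: b)) <= size a)
  \/ (exists C D, ccut c (a ++ x :: 0 :: b) = C ++ x :: 0 :: D /\
        ccut c (a ++ x.-1 :: b) = C ++ x.-1 :: D /\ size C = size a).
Proof.
move=> Hx; elim: a c => [|y a IH] [|c].
- by left; rewrite !ccut0.
- right; exists [::], (ccut (c + x.-1) b); split=> //=.
  by rewrite -(prednK Hx) addnS /= addn0.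
- by left; rewrite !ccut0.
- case: (IH (c + y)) => [[E1 E2]|[C [D [E1 [E2 E3]]]]].
    by left; rewrite /= E1; split=> //=; move: E2; rewrite E1.
  by right; exists (y :: C), D; rewrite /= E1 E2 E3.
Qed.

Lemma R1 c ae af xe xf be bf : size ae = size af -> 0 < xe -> 0 < xf ->
  (ccut c (ae ++ xe :: 0 :: be) = ccut c (af ++ xf :: 0 :: bf) <->
   ccut c (ae ++ xe.-1 :: be) = ccut c (af ++ xf.-1 :: bf)).
Proof.
move=> Hs He Hf.
case: (cut_red c ae be He) => [[E1 E2]|[C [D [E1 [E2 E3]]]]];
case: (cut_red c af bf Hf) => [[F1 F2]|[C' [D' [F1 [F2 F3]]]]].
- by rewrite -E1 -F1.
- rewrite -E1 F1 F2; split=> H; by move: E2; rewrite H size_cat /=; lia.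
- rewrite E1 E2 -F1; split=> H; by move: F2; rewrite -H size_cat /=; lia.
- rewrite E1 E2 F1 F2; split=> H.
    have HC : C = C' by move/(congr1 (take (size C))): H; rewrite !take_size_cat //; lia.
    subst C'; move/(congr1 (drop (size C))): H; rewrite !drop_size_cat //; case=> -> ->; by [].
  have HC : C = C' by move/(congr1 (take (size C))): H; rewrite !take_size_cat //; lia.
  subst C'; move/(congr1 (drop (size C))): H; rewrite !drop_size_cat //; case=> E ->.
  by rewrite -(prednK He) -(prednK Hf) E.
Qed.

Lemma cut_zeros c s : (forall j, j < c -> nth 0 s j = 0) -> ccut c s = nseq (minn c (size s)) 0.
Proof.
elim: s c => [|x s IH] [|c] H //=; rewrite ?ccut0 ?minn0 //.
by rewrite minnSS; have := H 0 (ltn0Sn _) => /= ->; rewrite addn0 IH // => j Hj; exact: (H j.+1).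
Qed.

Lemma cut_prefix c s : exists X, s = ccut c s ++ X.
Proof.
elim: s c => [|x s IH] [|c]; try by exists [::].
- by exists (x :: s); rewrite ccut0.
- by case: (IH (c + x)) => X E; exists X; rewrite /= -E.
Qed.

Lemma cut_size c s : minn c (size s) <= size (ccut c s).
Proof.
elim: s c => [|x s IH] [|c] //=; rewrite ?ccut0 ?minn0 //.
rewrite minnSS ltnS; apply: leq_trans (IH (c + x)); lia.
Qed.

Lemma Lpos c s0 : has (fun x => 0 < x) (ccut c (rcons s0 0)) ->
  exists p x q, 0 < x /\ ccut c (rcons s0 0) = p ++ x :: 0 :: q.
Proof.
elim: s0 c => [|y s0 IH] [|c] //=; rewrite ?ccut0 //.
  by case: c.
case/orP => [Hy|Ht].
  case E: (has (fun x => 0 < x) (ccut (c + y) (rcons s0 0))).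
    by case: (IH _ E) => p [x [q [Hx ->]]]; exists (y :: p), x, q.
  exists [::], y, (ccut (c + y).-1 (behead (rcons s0 0))); split=> //=.
  move: E; have Hcy : 0 < c + y by lia.
  rewrite -(prednK Hcy); case: s0 {IH} => [|z s0] /=; first by rewrite addn0.
  by case: z => [|z] //=; rewrite addn0.
by case: (IH _ Ht) => p [x [q [Hx ->]]]; exists (y :: p), x, q.
Qed.


Definition cnt (w : word) (k : nat) (b : bool) := count_mem (k, b) w.
Definition seqc (w : word) (b : bool) (N : nat) := [seq cnt w k b | k <- iota 0 N].
Definition lerel (a c : letter) := a.1 <= c.1.
Definition gerel (a c : letter) := c.1 <= a.1.

Definition Inv (w : word) (N : nat) :=
  [/\ 0 < N,
      exists P Q, [/\ w = P ++ Q, all (fun a : letter => a.2) P,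
                     all (fun a : letter => ~~ a.2) Q, pairwise lerel P & pairwise gerel Q],
      Vp (seqc w true N), Vp (seqc w false N)
    & forall k b, N <= k -> cnt w k b = 0].

Definition Rel (i1 : nat) (w : word) (N : nat) :=
  ccut i1.-1 (behead (seqc w false N)) = ccut i1.-1 (behead (seqc w true N)).

Lemma S1 (u P Q R : word) (x : letter) : all (fun a : letter => ~~ a.2) Q -> x.2 ->
  P ++ Q = u ++ x :: R -> exists P2, P = u ++ x :: P2 /\ R = P2 ++ Q.
Proof.
move=> HQ Hx; elim: u P => [|y u IH] [|p P] E /=.
- by move: HQ; rewrite /= in E; rewrite E /= Hx.
- by case: E => -> <-; exists P.
- by move: HQ; rewrite /= in E; rewrite E /= all_cat /= Hx !andbF.
- by case: E => -> /IH [P2 [-> ->]]; exists P2.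
Qed.

Lemma S2 (P2 Q M z : word) (x : letter) : all (fun a : letter => a.2) P2 -> ~~ x.2 ->
  P2 ++ Q = M ++ x :: z -> exists Q1, M = P2 ++ Q1 /\ Q = Q1 ++ x :: z.
Proof.
move=> HP Hx; elim: P2 M HP => [|p P2 IH] M /=.
  by move=> _ ->; exists M.
case/andP=> Hp HP; case: M => [|m M] /=.
  by case=> E _; move: Hp Hx; rewrite E => ->.
by case=> -> /(IH _ HP) [Q1 [-> ->]]; exists Q1.
Qed.

Lemma cnt_cat (s t : word) k b : cnt (s ++ t) k b = cnt s k b + cnt t k b.
Proof. exact: count_cat. Qed.

Lemma cnt_cons (a : letter) (s : word) k b : cnt (a :: s) k b = (a == (k, b)) + cnt s k b.
Proof. by []. Qed.

Lemma cnt_out (s : word) (p : pred nat) : all (fun a : letter => p a.1) s -> forall k b, ~~ p k -> cnt s k b = 0.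
Proof.
move=> H k b Hk; apply/count_memPn; apply/negP => Hin.
by move/allP: H => /(_ _ Hin) /=; rewrite (negbTE Hk).
Qed.

Lemma cnt_shift (v : word) k b : cnt (map shift_letter v) k.+1 b = cnt v k b.
Proof.
rewrite /cnt count_map; apply: eq_count => -[j c] /=.
by rewrite /shift_letter /= !xpair_eqE eqSS.
Qed.

Lemma map_iota_split (F : nat -> nat) i K :
  map F (iota 0 (i + K.+1)) = map F (iota 0 i) ++ F i :: map F (iota i.+1 K).
Proof. by rewrite iotaD map_cat. Qed.

Lemma last0 w b N : Vp (seqc w b N) -> 0 < N -> cnt w N.-1 b = 0.
Proof.
move=> V HN; have := V N.-1; rewrite /seqc size_map size_iota -map_drop drop_iota.
have -> : N - N.-1 = 1 by move: HN; clear; lia.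
rewrite add0n /= addn0; move: HN; clear; lia.
Qed.

Lemma step_lem i1 w w' N : Inv w N -> red_step w w' ->
  Inv w' N.-1 /\ (Rel i1 w N <-> Rel i1 w' N.-1).
Proof.
case=> HN [P [Q [EPQ aP aQ pP pQ]]] VT VF Hz [u [v [z [i [Hi Hv Ew Ew']]]]].
have [P2 [EP ER]] : exists P2, P = u ++ (i, true) :: P2 /\ map shift_letter v ++ (i, false) :: z = P2 ++ Q.
  by apply: (S1 aQ (isT : (i, true).2)); rewrite -EPQ.
have aP2 : all (fun a : letter => a.2) P2 by move: aP; rewrite EP all_cat /= => /andP [_ H].
have [Q1 [EM EQ]] := S2 aP2 (isT : ~~ (i, false).2) (esym ER).
set v1 := take (size P2) v; set v2 := drop (size P2) v.
have Ev1 : map shift_letter v1 = P2 by rewrite /v1 map_take EM take_size_cat.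
have Ev2 : map shift_letter v2 = Q1 by rewrite /v2 map_drop EM drop_size_cat.
have Ev : v = v1 ++ v2 by rewrite cat_take_drop.
have Hu : all (fun a : letter => a.1 <= i) u.
  by move: pP; rewrite EP pairwise_cat allrel_consr => /andP [/andP [H _] _].
have Hzz : all (fun a : letter => a.1 <= i) z.
  by move: pQ; rewrite EQ pairwise_cat pairwise_cons => /and3P [_ _ /andP [H _]].
have Hv' : all (fun a : letter => i < a.1) v by apply: sub_all Hv => -[j c].
have Hv1 : all (fun a : letter => i < a.1) v1.
  by apply/allP => a Ha; move/allP: Hv' => /(_ a (mem_take Ha)).
have Hv2 : all (fun a : letter => i < a.1) v2.
  by apply/allP => a Ha; move/allP: Hv' => /(_ a (mem_drop Ha)).
have HP2 : all (fun a : letter => i.+1 < a.1) P2 by rewrite -Ev1 all_map.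
have HQ1 : all (fun a : letter => i.+1 < a.1) Q1 by rewrite -Ev2 all_map.
have Ew2 : w = u ++ (i, true) :: P2 ++ Q1 ++ (i, false) :: z by rewrite EPQ EP EQ -catA.
have Ew'2 : w' = u ++ v1 ++ v2 ++ z by rewrite Ew' Ev -catA.
have C1 : forall k b, k <= i -> cnt w' k b = cnt w k b - (k == i).
  move=> k b Hk; rewrite Ew2 Ew'2 !cnt_cat !cnt_cons !cnt_cat cnt_cons.
  rewrite (cnt_out (p := fun j => i < j) Hv1) ?(cnt_out (p := fun j => i < j) Hv2)
    ?(cnt_out (p := fun j => i.+1 < j) HP2) ?(cnt_out (p := fun j => i.+1 < j) HQ1)
    -?leqNgt; try by [apply: leqW|].
  case: (eqVneq k i) => [->|Hne].
    by rewrite !xpair_eqE !eqxx /=; case: b => /=; rewrite !add0n addnCA addKn.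
  have Hne' : (i == k) = false by rewrite eq_sym (negbTE Hne).
  by rewrite !xpair_eqE Hne' /= !add0n subn0.
have C2 : forall k b, i < k -> cnt w' k b = cnt w k.+1 b.
  move=> k b Hk; rewrite Ew2 Ew'2 !cnt_cat !cnt_cons !cnt_cat cnt_cons.
  rewrite !(cnt_out (p := fun j => j <= i) Hu) ?(cnt_out (p := fun j => j <= i) Hzz);
    try by rewrite -ltnNge ?ltnS ?(ltnW Hk).
  rewrite -Ev1 -Ev2 !cnt_shift !xpair_eqE.
  have -> : (i == k.+1) = false by apply/negbTE; rewrite neq_ltn ltnS ltnW.
  by rewrite /= !add0n addn0.
have C3 : forall b, cnt w i.+1 b = 0.
  move=> b; rewrite Ew2 !cnt_cat !cnt_cons !cnt_cat cnt_cons.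
  rewrite (cnt_out (p := fun j => j <= i) Hu) ?(cnt_out (p := fun j => j <= i) Hzz) -?ltnNge //.
  rewrite (cnt_out (p := fun j => i.+1 < j) HP2) ?(cnt_out (p := fun j => i.+1 < j) HQ1) ?ltnn //.
  by rewrite !xpair_eqE (ltn_eqF (ltnSn i)).
have C4 : forall b, 0 < cnt w i b.
  move=> b; rewrite Ew2 !cnt_cat !cnt_cons !cnt_cat cnt_cons !xpair_eqE eqxx.
  by case: b => /=; rewrite ?addnS ?addSn.
have h1 : i < N.
  rewrite ltnNge; apply/negP => /(Hz i true) E; have := C4 true; by rewrite E.
have h2 : i != N.-1.
  apply/negP => /eqP E; have := C4 true; by rewrite E (last0 VT HN).
have HNK : N = i + (N - i.+2).+2.
  by move: h1 h2; clear; move=> h1 /eqP h2; lia.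
set K := N - i.+2 in HNK.
have Dseq : forall b, seqc w b N = map (cnt w ^~ b) (iota 0 i) ++ cnt w i b :: 0 :: map (cnt w ^~ b) (iota i.+2 K).
  by move=> b; rewrite /seqc HNK (map_iota_split _ i K.+1) /= C3.
have DN : N.-1 = i + K.+1 by rewrite HNK addnS.
have Dseq' : forall b, seqc w' b N.-1 = map (cnt w ^~ b) (iota 0 i) ++ (cnt w i b).-1 :: map (cnt w ^~ b) (iota i.+2 K).
  move=> b; rewrite /seqc DN map_iota_split C1 // eqxx subn1; congr (_ ++ _ :: _).
    apply/eq_in_map => k; rewrite mem_iota add0n /= => Hk.
    by rewrite C1 ?(ltn_eqF Hk) ?subn0 // ltnW.
  rewrite -[i.+2]/(1 + i.+1) iotaDl -map_comp; apply/eq_in_map => k; rewrite mem_iota => /andP [Hk _].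
  by rewrite /= C2.
split.
  split.
  - by rewrite DN addnS.
  - exists (u ++ v1), (v2 ++ z); split.
    + by rewrite Ew'2 !catA.
    + rewrite all_cat; apply/andP; split.
        by move: aP; rewrite EP all_cat => /andP [].
      by move: aP2; rewrite -Ev1 all_map; apply: sub_all => -[j c].
    + rewrite all_cat; apply/andP; split.
        by move: aQ; rewrite EQ all_cat -Ev2 all_map => /andP [H _]; apply: sub_all H => -[j c].
      by move: aQ; rewrite EQ all_cat => /andP [_ /andP [_ H]].
    + rewrite pairwise_cat; apply/and3P; split.
      * apply/allrelP => x y Hx Hy; rewrite /lerel.
        move/allP: Hu => /(_ x Hx) H1; move/allP: Hv1 => /(_ y Hy) H2.
        exact: leq_trans H1 (ltnW H2).
      * by move: pP; rewrite EP pairwise_cat => /and3P [].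
      * move: pP; rewrite EP pairwise_cat pairwise_cons -Ev1 pairwise_map => /and3P [_ _ /andP [_ H]].
        by apply: sub_pairwise H => a c; rewrite /relpre /lerel /= ltnS.
    + rewrite pairwise_cat; apply/and3P; split.
      * apply/allrelP => x y Hx Hy; rewrite /gerel.
        move/allP: Hzz => /(_ y Hy) H1; move/allP: Hv2 => /(_ x Hx) H2.
        exact: leq_trans H1 (ltnW H2).
      * move: pQ; rewrite EQ pairwise_cat -Ev2 pairwise_map => /and3P [_ H _].
        by apply: sub_pairwise H => a c; rewrite /relpre /gerel /= ltnS.
      * by move: pQ; rewrite EQ pairwise_cat pairwise_cons => /and3P [_ _ /andP [_ H]].
  - by rewrite Dseq'; apply: Vp_red; [rewrite -Dseq | exact: C4].
  - by rewrite Dseq'; apply: Vp_red; [rewrite -Dseq | exact: C4].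
  - move=> k b Hk; rewrite C2; first by apply: Hz; rewrite HNK; move: Hk; rewrite DN; clear; lia.
    by move: Hk; rewrite DN; clear; lia.
rewrite /Rel !Dseq !Dseq'.
have Ei : iota 0 i = 0 :: iota 1 i.-1 by rewrite -{1}(prednK Hi).
rewrite !Ei /=.
apply: R1; [by rewrite !size_map | exact: C4 | exact: C4].
Qed.


Lemma multi i1 w w' : rtc red_step w w' -> forall N, Inv w N ->
  exists N', Inv w' N' /\ (Rel i1 w N <-> Rel i1 w' N').
Proof.
elim=> [a|a b c Hab _ IH] N HI; first by exists N.
have [HI' HR] := step_lem i1 HI Hab.
have [N' [HI'' HR']] := IH _ HI'; exists N'; split=> //; by rewrite HR.
Qed.

Lemma in_cnt (w : word) k b : ((k, b) \in w) = (0 < cnt w k b).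
Proof.
apply/idP/idP => [Hin|Hc]; first by rewrite lt0n; apply/negP => /eqP/count_memPn; rewrite Hin.
by apply/negPn/negP => /count_memPn E; move: Hc; rewrite /cnt E.
Qed.

Lemma behE w b N : 0 < N -> behead (seqc w b N) = map (cnt w ^~ b) (iota 1 N.-1).
Proof. by move=> HN; rewrite /seqc -{1}(prednK HN). Qed.

Lemma nth_beh w b N j : j < N.-1 -> nth 0 (map (cnt w ^~ b) (iota 1 N.-1)) j = cnt w j.+1 b.
Proof. by move=> Hj; rewrite (nth_map 0) ?size_iota // nth_iota. Qed.

Lemma cut_nth c S p x q : ccut c S = p ++ x :: 0 :: q ->
  [/\ nth 0 S (size p) = x, nth 0 S (size p).+1 = 0 & (size p).+1 < size S].
Proof.
move=> E; case: (cut_prefix c S) => X EX.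
rewrite EX E -catA !nth_cat size_cat /= ltnn subnn /=.
rewrite ltnNge leqnSn /= subSn // subnn /=; split=> //; lia.
Qed.

Lemma final i1 w N : 0 < i1 -> Inv w N -> partially_reduced w ->
  (Rel i1 w N <-> ~ exists t b, 1 <= t <= i1.-1 /\ (t, b) \in w).
Proof.
move=> Hi1 [HN _ VT VF Hz] PR; split.
  move=> HRel [t [b [/andP [Ht1 Ht2] Hin]]].
  have Hc : 0 < cnt w t b by rewrite -in_cnt.
  have HtN : t < N by rewrite ltnNge; apply/negP => /(Hz t b) E; move: Hc; rewrite E.
  have Hlast : forall b', behead (seqc w b' N) = rcons (map (cnt w ^~ b') (iota 1 N.-2)) 0.
    move=> b'; rewrite behE //.
    have -> : N.-1 = N.-2 + 1 by move: Ht1 HtN; clear; lia.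
    rewrite iotaD map_cat cats1 /= add1n.
    have -> : N.-2.+1 = N.-1 by move: Ht1 HtN; clear; lia.
    by rewrite addn1 /=; case: b'; [rewrite (last0 VT HN) | rewrite (last0 VF HN)].
  have Hpos : has (fun x => 0 < x) (ccut i1.-1 (behead (seqc w b N))).
    set C := ccut i1.-1 _.
    have HsC : t.-1 < size C.
      apply: leq_trans (cut_size _ _); rewrite size_behead /seqc size_map size_iota.
      move: Ht1 Ht2 HtN; clear; lia.
    apply/hasP; exists (nth 0 C t.-1); first exact: mem_nth.
    case: (cut_prefix i1.-1 (behead (seqc w b N))) => X EX.
    have := congr1 (nth 0 ^~ t.-1) EX; rewrite nth_cat HsC -/C => <-.
    rewrite behE // nth_beh ?prednK //; move: Ht1 HtN; clear; lia.
  move: Hpos; rewrite Hlast => /Lpos [p [x [q [Hx E]]]].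
  have Ef : ccut i1.-1 (behead (seqc w (~~ b) N)) = p ++ x :: 0 :: q.
    by case: b Hlast E {Hin Hc} => Hlast E; rewrite -E -Hlast // HRel.
  rewrite -Hlast in E.
  have [E1 E2 E3] := cut_nth E; have [F1 F2 F3] := cut_nth Ef.
  have Hsz : (size p).+1 < N.-1 by move: E3; rewrite size_behead /seqc size_map size_iota.
  rewrite !behE // !nth_beh // in E1 E2 F1 F2; last by apply: ltnW.
  all: try by apply: ltnW.
  have H1 : forall b', ((size p).+1, b') \in w.
    move=> b'; rewrite in_cnt; case: b b' E1 F1 {E2 F2 E Ef E3 F3 Hlast Hin Hc} => -[] /= E1 F1; by rewrite ?E1 ?F1.
  have := PR (size p).+1 (ltn0Sn _) (H1 true) (H1 false).
  by rewrite !in_cnt; case: b E2 F2 {E1 F1 E Ef E3 F3 Hlast Hin Hc} => /= E2 F2; rewrite ?E2 ?F2.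
move=> Hno; rewrite /Rel !behE // !cut_zeros //.
  by rewrite !size_map.
all: move=> j Hj; case: (ltnP j N.-1) => HjN; last by rewrite nth_default // size_map size_iota.
all: rewrite nth_beh //; apply/eqP; rewrite -leqn0 leqNgt -in_cnt; apply/negP => Hin.
all: apply: Hno; eexists; eexists; split; last exact: Hin; move: Hj; clear; lia.
Qed.


Fixpoint pos_from (k : nat) (s : seq nat) : word :=
  match s with [::] => [::] | x :: s' => nseq x (k, true) ++ pos_from k.+1 s' end.
Fixpoint neg_from (k : nat) (s : seq nat) : word :=
  match s with [::] => [::] | x :: s' => neg_from k.+1 s' ++ nseq x (k, false) end.

Lemma posE k s : flatten [seq nseq (nth 0 s (i - k)) (i, true) | i <- iota k (size s)] = pos_from k s.
Proof.
elim: s k => [//|x s IH] k /=; rewrite subnn /=; congr (_ ++ _); rewrite -IH.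
congr flatten; apply/eq_in_map => i; rewrite mem_iota => /andP [Hi _].
by rewrite subnS -(subnSK Hi) /=; congr nseq; rewrite subnSK.
Qed.

Lemma negE k s : flatten [seq nseq (nth 0 s (i - k)) (i, false) | i <- rev (iota k (size s))] = neg_from k s.
Proof.
elim: s k => [//|x s IH] k /=; rewrite rev_cons map_rcons flatten_rcons subnn /=; congr (_ ++ _); rewrite -IH.
congr flatten; apply/eq_in_map => i; rewrite mem_rev mem_iota => /andP [Hi _].
by rewrite -(subnSK Hi) /=.
Qed.

Lemma assocE T1 T2 : assoc_word T1 T2 = pos_from 0 (leaf_exps T2) ++ neg_from 0 (leaf_exps T1).
Proof.
rewrite /assoc_word -posE -negE; congr (flatten _ ++ flatten _); apply/eq_map => i; by rewrite subn0.
Qed.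

Lemma cnt_pos k s j b : cnt (pos_from k s) j b = if b && (k <= j) then nth 0 s (j - k) else 0.
Proof.
elim: s k => [|x s IH] k /=; first by case: (b && _); rewrite ?nth_nil.
rewrite cnt_cat IH /cnt count_nseq /= xpair_eqE.
case: b IH => IH /=; last by rewrite andbF.
case: (ltngtP k j) => [Hkj|Hjk|->]; rewrite ?eqxx ?subnn //=.
  by rewrite mul0n add0n -(subnSK Hkj).
by rewrite mul1n addn0.
Qed.

Lemma cnt_neg k s j b : cnt (neg_from k s) j b = if ~~ b && (k <= j) then nth 0 s (j - k) else 0.
Proof.
elim: s k => [|x s IH] k /=; first by case: (~~ b && _); rewrite ?nth_nil.
rewrite cnt_cat IH /cnt count_nseq /= xpair_eqE.
case: b IH => IH /=; first by rewrite andbF.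
case: (ltngtP k j) => [Hkj|Hjk|->]; rewrite ?eqxx ?subnn //=.
  by rewrite mul0n addn0 -(subnSK Hkj).
by rewrite mul1n add0n.
Qed.

Lemma pairwise_nseq (T : Type) (r : rel T) n x : r x x -> pairwise r (nseq n x).
Proof. move=> H; elim: n => [//|n IH] /=; rewrite IH all_nseq H orbT //. Qed.

Lemma pos_ok k s : [/\ all (fun a : letter => a.2) (pos_from k s),
  all (fun a : letter => k <= a.1) (pos_from k s) & pairwise lerel (pos_from k s)].
Proof.
elim: s k => [//|x s IH] k /=; have [H1 H2 H3] := IH k.+1.
rewrite !all_cat H1 !all_nseq /= leqnn !orbT /=; split=> //.
  by apply: sub_all H2 => a /ltnW.
rewrite pairwise_cat H3 pairwise_nseq ?andbT; last exact: leqnn.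
apply/allrelP => a c; rewrite mem_nseq => /andP [_ /eqP ->] Hc.
by move/allP: H2 => /(_ c Hc) /ltnW.
Qed.

Lemma neg_ok k s : [/\ all (fun a : letter => ~~ a.2) (neg_from k s),
  all (fun a : letter => k <= a.1) (neg_from k s) & pairwise gerel (neg_from k s)].
Proof.
elim: s k => [//|x s IH] k /=; have [H1 H2 H3] := IH k.+1.
rewrite !all_cat H1 !all_nseq /= leqnn !orbT /= andbT; split=> //.
  by apply: sub_all H2 => a /ltnW.
rewrite pairwise_cat H3 pairwise_nseq ?andbT; last exact: leqnn.
apply/allrelP => a c Ha; rewrite mem_nseq => /andP [_ /eqP ->].
by move/allP: H2 => /(_ a Ha) /ltnW.
Qed.

Lemma size_leaf T : size (leaf_exps T) = (nodes T).+1.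
Proof. elim: T => [//|l _ r IH] /=; rewrite size_cat size_lexp IH; lia. Qed.

Lemma init_inv T1 T2 : nodes T1 = nodes T2 -> Inv (assoc_word T1 T2) (nodes T1).+1 /\
  seqc (assoc_word T1 T2) false (nodes T1).+1 = leaf_exps T1 /\
  seqc (assoc_word T1 T2) true (nodes T1).+1 = leaf_exps T2.
Proof.
move=> EN.
have Hc : forall j b, cnt (assoc_word T1 T2) j b = nth 0 (if b then leaf_exps T2 else leaf_exps T1) j.
  by move=> j b; rewrite assocE cnt_cat cnt_pos cnt_neg !subn0 leq0n; case: b => /=; rewrite ?addn0 ?add0n.
have Sf : seqc (assoc_word T1 T2) false (nodes T1).+1 = leaf_exps T1.
  by rewrite /seqc (eq_map (fun k => Hc k false)) -size_leaf; exact: mkseq_nth.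
have St : seqc (assoc_word T1 T2) true (nodes T1).+1 = leaf_exps T2.
  by rewrite /seqc (eq_map (fun k => Hc k true)) EN -size_leaf; exact: mkseq_nth.
split=> //; split=> //.
- exists (pos_from 0 (leaf_exps T2)), (neg_from 0 (leaf_exps T1)).
  have [A1 _ A3] := pos_ok 0 (leaf_exps T2); have [B1 _ B3] := neg_ok 0 (leaf_exps T1).
  by split=> //; exact: assocE.
- rewrite St; exact: Vp_leaf.
- rewrite Sf; exact: Vp_leaf.
- move=> k b Hk; rewrite Hc nth_default //; case: b; rewrite size_leaf //; by rewrite -EN.
Qed.

Unset Implicit Arguments.
Theorem lemma3p6 (i1 : nat) (irest : seq nat) (T1 T2 : tree) (w' : word) :
  0 < i1 -> sorted ltn (i1 :: irest) ->
  nodes T1 = nodes T2 ->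
  rtc red_step (assoc_word T1 T2) w' -> partially_reduced w' ->
  ((exists (t : nat) (b : bool), 1 <= t <= i1.-1 /\ (t, b) \in w') ->
      ~ d_RRA_defined (i1 :: irest) T1 T2) /\
  (~ (exists (t : nat) (b : bool), 1 <= t <= i1.-1 /\ (t, b) \in w') ->
      d_RRA_defined (i1 :: irest) T1 T2).
Proof.
move=> Hi Hs EN Hrtc PR.
have [HI [Sf St]] := init_inv EN.
have [N' [HI' HR]] := multi i1 Hrtc HI.
have HF := final Hi HI' PR.
have Hrel : Rel i1 (assoc_word T1 T2) (nodes T1).+1 <-> invT i1 T1 = invT i1 T2.
  by rewrite /Rel /invT Sf St.
split.
  move=> Hex Hd; apply: (proj1 HF _ Hex); apply/HR/Hrel; exact: inv_rtc Hd.
move=> Hno; apply: conv => //; apply/Hrel/HR/HF; exact: Hno.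
Qed.
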